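(* Let $p \in [0,1]$ and let $S(n,j) = \Pr[I_{n,p} \le j] = \sum_{i=0}^{j}\binom{n}{i}p^i(1-p)^{n-i}$, where $I_{n,p}$ is a binomial random variable with $n$ trials and success probability $p$. Fix an integer $k \ge 0$. Then for every $n \ge k$, $S(n+1, n+1-k) \ge S(n, n-k)$; that is, $S(n,n-k)$ is monotonically non-decreasing in $n$.
   Context: $S(n,j)$ is called the (upper) truncated binomial distribution. *)

(* Defs.v *)
From mathcomp Require Import all_boot all_order all_algebra.
Set Implicit Arguments. Unset Strict Implicit. Unset Printing Implicit Defensive.
Import Order.TTheory GRing.Theory Num.Theory.
Local Open Scope ring_scope.

Definition truncBin (R : realFieldType) (p : R) (n j : nat) : R :=
  \sum_(0 <= i < j.+1) ('C(n, i))%:R * p ^+ i * (1 - p) ^+ (n - i).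

(* Main.v *)
Require Import Defs.
From mathcomp Require Import all_boot all_order all_algebra.
From mathcomp Require Import ring.
Import Order.TTheory GRing.Theory Num.Theory.
Local Open Scope ring_scope.

Definition bterm {R : realFieldType} (p : R) (n i : nat) : R :=
  ('C(n, i))%:R * p ^+ i * (1 - p) ^+ (n - i).

Lemma pascal_b (R : realFieldType) (p : R) n i :
  bterm p n.+1 i.+1 = p * bterm p n i + (1 - p) * bterm p n i.+1.
Proof.
rewrite /bterm binS addnC natrD mulrDl mulrDl subSS.
congr (_ + _); first by rewrite exprS; ring.
case: (ltnP i n) => hi.
  have -> : (n - i = (n - i.+1).+1)%N by rewrite subnSK.
  by rewrite !exprS; ring.
by rewrite bin_small ?ltnS // !mul0r mulr0.
Qed.

Lemma truncS (R : realFieldType) (p : R) n j :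
  truncBin p n.+1 j.+1 = truncBin p n j + (1 - p) * bterm p n j.+1.
Proof.
rewrite /truncBin.
have E : forall m l, \sum_(0 <= i < l) ('C(m, i))%:R * p ^+ i * (1 - p) ^+ (m - i)
   = \sum_(0 <= i < l) bterm p m i by [].
rewrite !E.
rewrite big_nat_recl // (eq_bigr (fun i => p * bterm p n i + (1 - p) * bterm p n i.+1));
  last by move=> i _; rewrite pascal_b.
rewrite big_split /= -!mulr_sumr.
have -> : bterm p n.+1 0 = (1 - p) * bterm p n 0.
  by rewrite /bterm !bin0 !expr0 !subn0 exprS; ring.
have HT : \sum_(0 <= i < j.+1) bterm p n i.+1
   = \sum_(0 <= i < j.+1) bterm p n i + bterm p n j.+1 - bterm p n 0.
  rewrite -big_nat_recr //= [in RHS]big_nat_recl //; ring.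
rewrite HT; ring.
Qed.

Theorem mainTheorem2 (R : realFieldType) (p : R) (k n : nat) :
  0 <= p -> p <= 1 -> (k <= n)%N ->
  truncBin p n (n - k) <= truncBin p n.+1 (n.+1 - k).
Proof.
move=> p0 p1 kn.
rewrite subSn // truncS lerDl mulr_ge0 ?subr_ge0 // /bterm.
by rewrite !mulr_ge0 ?exprn_ge0 ?subr_ge0.
Qed.
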